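(* Assume (A1), (A2), (A4), (A5), (A6) and (A7) of the context. Then for $1\le k,\ell\le d$, $$\frac1{\sqrt n}\sum_{i=1}^n\Big\{R_{b_n,k}(Y_i)R_{b_n,\ell}(Y_i)\frac{f(Y_i)}{f_{b_n}(Y_i)}-\mathbb{E}\Big[R_{b_n,k}(Y)R_{b_n,\ell}(Y)\frac{f(Y)}{f_{b_n}(Y)}\Big]\Big\}$$ $$=\frac1{\sqrt n}\sum_{i=1}^n\Big\{R_k(Y_i)R_\ell(Y_i)-\mathbb{E}\big[R_k(Y)R_\ell(Y)\big]\Big\}+o_p(1).$$
   Context: Setting. $X=(X_1,\dots,X_d)^T$ is an $\mathbb{R}^d$-valued random vector and $Y$ a real random variable with density $f>0$ on $\mathbb{R}$; each $(X_j,Y)$ has joint density $f_{(X_j,Y)}$; $g_j(y)=\int xf_{(X_j,Y)}(x,y)dx$, $R_j=g_j/f$; $f,g_j\in L^2(\mathbb{R})$. $\{(X^{(i)},Y_i)\}_{i=1}^n$ i.i.d. sample of $(X,Y)$. $\varphi$ father wavelet, $\psi$ associated mother wavelet forming (via $\varphi(\cdot-k)$, $2^{\ell/2}\psi(2^\ell\cdot-k)$) an orthonormal basis of $L^2(\mathbb{R})$; $K(x,y)=\sum_k\varphi(x-k)\varphi(y-k)$. $(j_n)$ increasing integers tending to $\infty$. $(b_n)$ positive, $b_n\to0$; $f_{b_n}=\max(f,b_n)$, $R_{b_n,j}=g_j/f_{b_n}$. $u_n\sim v_n$ means $u_n/v_n$ bounded away from $0$ and $\infty$ for large $n$. Assumptions.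 (A1) $\|X\|\le G$ for some $G>0$. (A2) $f,g_j$ three times differentiable; there exist a neighborhood $U$ of $0$ and $c>0$ with $|f^{(3)}(y+u)-f^{(3)}(y)|\le c|u|$, $|g_j^{(3)}(y+u)-g_j^{(3)}(y)|\le c|u|$ for all $y$, $u\in U$, $j$. (A4) $\varphi,\psi$ bounded, compactly supported. (A5) $|K(x,y)|\le\Phi(x-y)$, $\Phi\ge0$ bounded, compactly supported, symmetric, $\int u^2\Phi^2<\infty$, $\int|u|^k\Phi<\infty$ for $k\in\{0,1,4\}$; $\int K(x,y)(y-x)^kdy=0$ for all $x$, $k\in\{1,2,3\}$. (A6) $2^{-j_n}\sim n^{-c_1}$, $b_n\sim n^{-c_2}$, $0<c_2<1/10$, $1/8+c_2/4<c_1<1/4-c_2$. (A7) $\mathbb{E}[R_j^2(Y)]<\infty$ for all $j$, and $\sqrt n\,\mathbb{E}[|R_k(Y)R_\ell(Y)|\mathbf 1_{\{f(Y)\le a_n\}}]\to0$ for all $k,\ell$ and every positive $(a_n)$ with $a_n\sim b_n$. *)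

(* Defs.v *)
From HB Require Import structures.
From mathcomp Require Import all_boot all_order all_algebra.
From mathcomp Require Import all_classical all_reals all_analysis.
Set Implicit Arguments. Unset Strict Implicit. Unset Printing Implicit Defensive.
Import Order.TTheory GRing.Theory Num.Theory numFieldNormedType.Exports.
Local Open Scope classical_set_scope.
Local Open Scope ring_scope.

Section Defs.
Context {R : realType}.
Notation mu := (@lebesgue_measure R).

Definition asym_equiv (u v : nat -> R) : Prop :=
  exists m M : R, 0 < m /\ 0 < M /\ \forall n \near \oo, m <= u n / v n <= M.

Definition L2fun (h : R -> R) : Prop :=
  measurable_fun setT h /\ (\int[mu]_x ((h x) ^+ 2)%:E < +oo)%E.

Definition L2inner (h1 h2 : R -> R) : \bar R := \int[mu]_x (h1 x * h2 x)%:E.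

Definition bdd_fun (h : R -> R) : Prop := exists M : R, forall x, `|h x| <= M.
Definition compact_supp (h : R -> R) : Prop :=
  exists A : R, forall x, A < `|x| -> h x = 0.

Definition wavelet_system (phi psi : R -> R) (a : int + (nat * int)) : R -> R :=
  match a with
  | inl k => fun x => phi (x - k%:~R)
  | inr (l, k) => fun x => Num.sqrt (2 ^+ l) * psi (2 ^+ l * x - k%:~R)
  end.

Definition is_ONB_L2 (e : int + (nat * int) -> R -> R) : Prop :=
  (forall a, L2fun (e a)) /\
  (forall a b, L2inner (e a) (e b) = (if a == b then 1 else 0)%:E) /\
  (forall h, L2fun h -> (forall a, L2inner h (e a) = 0%E) ->
     {ae mu, forall x, h x = 0}).

(* K(x,y) = sum_{k in Z} phi(x-k) phi(y-k), as limit of symmetric partial sums *)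
Definition wkernel (phi : R -> R) (x y : R) : R :=
  lim ((fun N : nat => \sum_(i < (2 * N).+1)
          phi (x - (i%:Z - N%:Z)%:~R) * phi (y - (i%:Z - N%:Z)%:~R)) @ \oo).

Definition fmaxb (f : R -> R) (b : R) (y : R) : R := Num.max (f y) b.

Definition three_times_diff (h : R -> R) : Prop :=
  forall (i : nat) (y : R), (i < 3)%N -> derivable (derive1n i h) y 1.

Definition third_deriv_lip (h : R -> R) (U : set R) (c : R) : Prop :=
  forall y u, U u -> `|derive1n 3 h (y + u) - derive1n 3 h y| <= c * `|u|.

Section Prob.
Context {d0 : measure_display} {T : measurableType d0} (P : probability T R).

Definition Ex (h : T -> R) : R := fine (\int[P]_w (h w)%:E).

Definition event_of {d : nat} (X : 'I_d -> T -> R) (Y : T -> R)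
  (B : 'I_d -> set R) (C : set R) : set T :=
  [set w | (forall j, B j (X j w)) /\ C (Y w)].

Definition iid_sample {d : nat} (X : 'I_d -> T -> R) (Y : T -> R)
  (Xs : nat -> 'I_d -> T -> R) (Ys : nat -> T -> R) : Prop :=
  (forall i j, measurable_fun setT (Xs i j)) /\
  (forall i, measurable_fun setT (Ys i)) /\
  (forall i (B : 'I_d -> set R) (C : set R),
     (forall j, measurable (B j)) -> measurable C ->
     P (event_of (Xs i) (Ys i) B C) = P (event_of X Y B C)) /\
  (forall (s : seq nat) (B : nat -> 'I_d -> set R) (C : nat -> set R),
     uniq s -> (forall i j, measurable (B i j)) -> (forall i, measurable (C i)) ->
     P (\big[setI/setT]_(i <- s) event_of (Xs i) (Ys i) (B i) (C i))
     = (\prod_(i <- s) P (event_of (Xs i) (Ys i) (B i) (C i)))%E).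

End Prob.
End Defs.

(* Main.v *)
Require Import Defs.
From HB Require Import structures.
From mathcomp Require Import all_boot all_order all_algebra.
From mathcomp Require Import all_classical all_reals all_analysis.
From mathcomp Require Import measurable_realfun ring lra.
Import Order.TTheory GRing.Theory Num.Theory numFieldNormedType.Exports.
Local Open Scope classical_set_scope.
Local Open Scope ring_scope.

Lemma measurable_inv (R : realType) : measurable_fun setT (@GRing.inv R).
Proof.
have -> : (@GRing.inv R) = fun x : R => if x == 0 then 0 else x^-1.
  by apply/funext => x; case: eqP => // ->; rewrite invr0.
apply: measurable_fun_if => //.
  exact: (measurable_realfun.measurable_fun_eqr (f := id) (g := cst 0)).
rewrite setTI.
have -> : (fun x : R => x == 0) @^-1` [set false] = [set x | x != 0].
  by apply/seteqP; split => x /=; case: (x == 0).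
apply: measurable_realfun.open_continuous_measurable_fun.
  exact: open_neq.
by move=> x; rewrite inE => /inv_continuous.
Qed.

Lemma key_bound (R : realType) (gk gl fy bb : R) : 0 < fy -> 0 < bb ->
  `|gk / Num.max fy bb * (gl / Num.max fy bb) * (fy / Num.max fy bb) - gk / fy * (gl / fy)|
     <= `|gk / fy * (gl / fy)| * ((fy <= bb)%R : bool)%:R /\
  `|gk / Num.max fy bb * (gl / Num.max fy bb) * (fy / Num.max fy bb)| <= `|gk / fy * (gl / fy)|.
Proof.
move=> f0 b0; rewrite maxEle; case: ifPn => h; last first.
  by rewrite divff ?gt_eqF // mulr1 subrr normr0 mulr0.
set t := fy / bb.
have t0 : 0 <= t by rewrite divr_ge0 // ltW.
have t1 : t <= 1 by rewrite ler_pdivrMr // mul1r.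
have t30 : 0 <= t ^+ 3 by rewrite exprn_ge0.
have t31 : t ^+ 3 <= 1 by rewrite exprn_ile1.
have -> : gk / bb * (gl / bb) * (fy / bb) = gk / fy * (gl / fy) * t ^+ 3.
  by rewrite /t; field; rewrite ?gt_eqF.
rewrite mulr1 -{2}(mulr1 (gk / fy * (gl / fy))) -mulrBr.
move: t30 t31; set u := t ^+ 3; set BB := gk / fy * (gl / fy) => t30 t31; clearbody u BB.
rewrite !normrM.
split.
  rewrite ler_piMr // ler0_norm ?subr_le0 //.
  by rewrite opprB lerBlDr lerDl.
by rewrite ler_piMr // ger0_norm.
Qed.
Lemma same_integral (R : realType) d (T : measurableType d) (P : probability T R)
  (Z W : T -> R) (h : R -> \bar R) :
  measurable_fun setT Z -> measurable_fun setT W ->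
  (forall A, measurable A -> P (Z @^-1` A) = P (W @^-1` A)) ->
  measurable_fun [set: R] h -> (forall y, (0 <= h y)%E) ->
  (\int[P]_w h (Z w) = \int[P]_w h (W w))%E.
Proof.
move=> mZ mW ZW mh h0.
have := ge0_integral_pushforward mZ P measurableT mh (fun y _ => h0 y).
have := ge0_integral_pushforward mW P measurableT mh (fun y _ => h0 y).
rewrite !preimage_setT => <- <-.
apply: eq_measure_integral => A mA _ /=.
by rewrite /pushforward ZW.
Qed.

Theorem lemma10 (R : realType) (d0 : measure_display) (T : measurableType d0)
  (P : probability T R) (d : nat)
  (X : 'I_d -> T -> R) (Y : T -> R)
  (Xs : nat -> 'I_d -> T -> R) (Ys : nat -> T -> R)
  (f : R -> R) (fXY : 'I_d -> R * R -> R) (g : 'I_d -> R -> R)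
  (G : R) (phi psi Phi : R -> R) (jn : nat -> int) (b : nat -> R) (c1 c2 : R)
  (* setting *)
  (HX : forall j, measurable_fun setT (X j))
  (HY : measurable_fun setT Y)
  (Hsample : iid_sample P X Y Xs Ys)
  (Hfpos : forall y, 0 < f y)
  (Hfdens : forall A : set R, measurable A ->
     P (Y @^-1` A) = (\int[lebesgue_measure]_(y in A) (f y)%:E)%E)
  (HfXYmeas : forall j, measurable_fun setT (fXY j))
  (HfXYpos : forall j z, 0 <= fXY j z)
  (HfXYdens : forall j (A B : set R), measurable A -> measurable B ->
     P [set w | A (X j w) /\ B (Y w)] =
     (\int[lebesgue_measure]_(x in A)
        \int[lebesgue_measure]_(y in B) (fXY j (x, y))%:E)%E)
  (Hg : forall j y,
     (g j y)%:E = (\int[lebesgue_measure]_x (x * fXY j (x, y))%:E)%E)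
  (HfL2 : L2fun f) (HgL2 : forall j, L2fun (g j))
  (Hjn_incr : {homo jn : m n / (m <= n)%N >-> m <= n})
  (Hjn_inf : forall M : int, \forall n \near \oo, M <= jn n)
  (Hbpos : forall n, 0 < b n)
  (Hb0 : b @ \oo --> (0 : R))
  (* (A1) *)
  (HG : 0 < G)
  (HA1 : {ae P, forall w, Num.sqrt (\sum_(j < d) X j w ^+ 2) <= G})
  (* (A2) *)
  (HA2f : three_times_diff f) (HA2g : forall j, three_times_diff (g j))
  (HA2lip : exists (U : set R) (c : R), U \in nbhs (0 : R) /\ 0 < c /\
     third_deriv_lip f U c /\ forall j, third_deriv_lip (g j) U c)
  (* (A4) *)
  (HONB : is_ONB_L2 (wavelet_system phi psi))
  (HA4 : bdd_fun phi /\ compact_supp phi /\ bdd_fun psi /\ compact_supp psi)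
  (* (A5) *)
  (HA5K : forall x y, `|wkernel phi x y| <= Phi (x - y))
  (HA5Phi : measurable_fun setT Phi /\ (forall u, 0 <= Phi u) /\
     bdd_fun Phi /\ compact_supp Phi /\ (forall u, Phi (- u) = Phi u))
  (HA5int2 : (\int[lebesgue_measure]_u ((u ^+ 2) * (Phi u) ^+ 2)%:E < +oo)%E)
  (HA5intk : forall k : nat, k \in [:: 0%N; 1%N; 4%N] ->
     (\int[lebesgue_measure]_u ((`|u| ^+ k) * Phi u)%:E < +oo)%E)
  (HA5mom : forall (x : R) (k : nat), k \in [:: 1%N; 2%N; 3%N] ->
     (\int[lebesgue_measure]_y (wkernel phi x y * (y - x) ^+ k)%:E)%E = 0%E)
  (* (A6) *)
  (HA6j : asym_equiv (fun n => 2 `^ (- (jn n)%:~R)) (fun n => n%:R `^ (- c1)))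
  (HA6b : asym_equiv b (fun n => n%:R `^ (- c2)))
  (HA6c : 0 < c2 /\ c2 < 1 / 10 /\ 1 / 8 + c2 / 4 < c1 /\ c1 < 1 / 4 - c2)
  (* (A7) *)
  (HA7a : forall j, (\int[P]_w ((g j (Y w) / f (Y w)) ^+ 2)%:E < +oo)%E)
  (HA7b : forall (k l : 'I_d) (a : nat -> R), (forall n, 0 < a n) ->
     asym_equiv a b ->
     (fun n => (Num.sqrt n%:R)%:E *
        \int[P]_w (`|g k (Y w) / f (Y w) * (g l (Y w) / f (Y w))|
                    * ((f (Y w) <= a n)%R : bool)%:R)%:E)%E @ \oo --> 0%E)
  (k l : 'I_d) :
  let Rb (j : 'I_d) (n : nat) (y : R) := g j y / fmaxb f (b n) y in
  let Rj (j : 'I_d) (y : R) := g j y / f y in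
  let An (n : nat) (y : R) := Rb k n y * Rb l n y * (f y / fmaxb f (b n) y) in
  let B (y : R) := Rj k y * Rj l y in
  let S1 (n : nat) (w : T) := (Num.sqrt n%:R)^-1 *
      \sum_(i < n) (An n (Ys i w) - Ex P (fun w' => An n (Y w'))) in
  let S2 (n : nat) (w : T) := (Num.sqrt n%:R)^-1 *
      \sum_(i < n) (B (Ys i w) - Ex P (fun w' => B (Y w'))) in
  forall eps : R, 0 < eps ->
    (fun n => P [set w | eps < `|S1 n w - S2 n w|]) @ \oo --> 0%E.
Proof.
move=> Rb Rj An B S1 S2 eps eps0.
have mf : measurable_fun setT f := HfL2.1.
have mg : forall j, measurable_fun setT (g j) := fun j => (HgL2 j).1.
have mdiv : forall u v : R -> R, measurable_fun setT u -> measurable_fun setT v ->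
    measurable_fun setT (fun y => u y / v y).
  move=> u v mu mv; apply: measurable_funM => //.
  exact: measurableT_comp (measurable_inv R) mv.
have mfm : forall n, measurable_fun setT (fmaxb f (b n)).
  by move=> n; exact: measurable_maxr.
have mB : measurable_fun setT B by apply: measurable_funM; exact: mdiv.
have mAn : forall n, measurable_fun setT (An n).
  by move=> n; apply: measurable_funM; [apply: measurable_funM|]; exact: mdiv.
pose h n y := `|B y| * ((f y <= b n)%R : bool)%:R.
have mh : forall n, measurable_fun setT (h n).
  move=> n; apply: measurable_funM; first exact: measurableT_comp mB.
  apply: measurableT_comp => //.
  exact: (measurable_fun_ler (f := f) (g := cst (b n))).
have h0 : forall n y, 0 <= h n y by move=> n y; rewrite mulr_ge0.
have hAB : forall n y, `|An n y - B y| <= h n y /\ `|An n y| <= `|B y|.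
  by move=> n y; exact: key_bound.
have hhB : forall n y, h n y <= `|B y|.
  by move=> n y; rewrite /h; case: (f y <= b n)%R; rewrite /= ?mulr1 ?mulr0.
have hBsq : forall y, `|B y| <= Rj k y ^+ 2 + Rj l y ^+ 2.
  move=> y; rewrite /B normrM -(real_normK (num_real (Rj k y))) -(real_normK (num_real (Rj l y))).
  have := sqr_ge0 (`|Rj k y| - `|Rj l y|).
  have := normr_ge0 (Rj k y); have := normr_ge0 (Rj l y). nra.
have mY := HY.
have mRsq : forall j, measurable_fun setT (fun w => Rj j (Y w) ^+ 2).
  move=> j; apply: measurable_funX; apply: measurableT_comp mY; exact: mdiv.
have iRsq : forall j, P.-integrable setT (EFin \o (fun w => Rj j (Y w) ^+ 2)).
  move=> j; apply/integrableP; split; first exact/measurable_EFinP.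
  under eq_integral do rewrite /= ger0_norm ?sqr_ge0//.
  exact: HA7a.
have iB : P.-integrable setT (EFin \o (B \o Y)).
  apply: (le_integrable measurableT _ _ (integrableD measurableT (iRsq k) (iRsq l))).
    by apply/measurable_EFinP; exact: measurableT_comp mB mY.
  move=> w _ /=; rewrite /= ?abse_EFin lee_fin (ger0_norm (x := _ + _)).
    exact: hBsq.
  by rewrite addr_ge0 ?sqr_ge0.
have iAn : forall n, P.-integrable setT (EFin \o (An n \o Y)).
  move=> n; apply: (le_integrable measurableT _ _ iB).
    by apply/measurable_EFinP; exact: measurableT_comp (mAn n) mY.
  by move=> w _ /=; rewrite /= ?abse_EFin lee_fin; exact: (hAB n (Y w)).2.
have ih : forall n, P.-integrable setT (EFin \o (h n \o Y)).
  move=> n; apply: (le_integrable measurableT _ _ iB).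
    by apply/measurable_EFinP; exact: measurableT_comp (mh n) mY.
  by move=> w _ /=; rewrite /= ?abse_EFin lee_fin (ger0_norm (h0 n (Y w))); exact: hhB.
pose E n := (\int[P]_w (h n (Y w))%:E)%E.
have Efin : forall n, E n \is a fin_num.
  by move=> n; exact: (integrable_fin_num measurableT (ih n)).
pose e n := fine (E n).
have Ee : forall n, E n = (e n)%:E by move=> n; rewrite /e fineK.
have e0 : forall n, 0 <= e n.
  by move=> n; rewrite -lee_fin -Ee; apply: integral_ge0 => w _; rewrite lee_fin.
have mYs : forall i, measurable_fun setT (Ys i) := Hsample.2.1.
have hYs : forall i A, measurable A -> P (Ys i @^-1` A) = P (Y @^-1` A).
  move=> i A mA.
  have := Hsample.2.2.1 i (fun _ => setT) A (fun _ => measurableT) mA.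
  have -> : event_of (Xs i) (Ys i) (fun _ => setT) A = Ys i @^-1` A.
    by apply/seteqP; split => w /=; [case | move=> ?; split].
  have -> : event_of X Y (fun _ => setT) A = Y @^-1` A.
    by apply/seteqP; split => w /=; [case | move=> ?; split].
  done.
have hEi : forall n i, (\int[P]_w (h n (Ys i w))%:E)%E = E n.
  move=> n i; apply: (@same_integral _ _ _ P (Ys i) Y (fun y => (h n y)%:E) (mYs i) mY (hYs i)).
    exact/measurable_EFinP.
  by move=> y; rewrite lee_fin.
have hc : forall n, `|Ex P (fun w => An n (Y w)) - Ex P (fun w => B (Y w))| <= e n.
  move=> n; rewrite /Ex.
  have f1 := integrable_fin_num measurableT (iAn n).
  have f2 := integrable_fin_num measurableT iB.
  rewrite -fineB // -lee_fin -abse_EFin fineK; last by rewrite fin_numB f1 f2.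
  rewrite /e fineK //.
  rewrite -integralB_EFin //; try exact: (iAn n); try exact: iB.
  under eq_integral do rewrite -EFinB.
  have mD : measurable_fun setT (fun w => (An n (Y w) - B (Y w))%:E).
    apply/measurable_EFinP; apply: measurable_funB; exact: measurableT_comp.
  apply: le_trans (le_abse_integral _ _ mD) _ => //.
  apply: ge0_le_integral => //.
  - by apply: measurableT_comp.
  - by apply/measurable_EFinP; exact: measurableT_comp.
  - move=> w _; rewrite /= lee_fin; exact: (hAB n (Y w)).1.
have hF : forall n w, `|S1 n w - S2 n w| <=
    (Num.sqrt n%:R)^-1 * \sum_(i < n) (h n (Ys i w) + e n).
  move=> n w; rewrite /S1 /S2 -mulrBr -sumrB normrM ger0_norm ?invr_ge0 ?sqrtr_ge0 //.
  apply: ler_wpM2l; first by rewrite invr_ge0 sqrtr_ge0.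
  apply: le_trans (ler_norm_sum _ _ _) _; apply: ler_sum => i _.
  set c1' := Ex _ _; set c2' := Ex _ _.
  have -> : An n (Ys i w) - c1' - (B (Ys i w) - c2') =
      (An n (Ys i w) - B (Ys i w)) - (c1' - c2') by ring.
  apply: le_trans (ler_normB _ _) _; apply: lerD; [exact: (hAB _ _).1 | exact: hc].
have mF : forall n, measurable_fun setT (fun w => S1 n w - S2 n w).
  move=> n; apply: measurable_funB; apply: measurable_funM => //;
    apply: measurable_sum => i; apply: measurable_funB => //.
    exact: measurableT_comp (mAn n) (mYs i).
  exact: measurableT_comp mB (mYs i).
pose A n := [set w | eps < `|S1 n w - S2 n w|].
have mA : forall n, measurable (A n).
  move=> n.
  have := measurable_fun_ltr (D := setT) (f := cst eps)
    (g := fun w => `|S1 n w - S2 n w|) (measurable_cst _)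
    (measurableT_comp (@normr_measurable R setT) (mF n)) measurableT (Y := [set true]) I.
  by rewrite setTI.
pose Z n w := (Num.sqrt n%:R)^-1 * \sum_(i < n) (h n (Ys i w) + e n).
have Z0 : forall n w, 0 <= Z n w.
  move=> n w; rewrite mulr_ge0 ?invr_ge0 ?sqrtr_ge0 //.
  by apply: sumr_ge0 => i _; rewrite addr_ge0.
have mZ : forall n, measurable_fun setT (Z n).
  move=> n; apply: measurable_funM => //; apply: measurable_sum => i.
  apply: measurable_funD => //; exact: measurableT_comp (mh n) (mYs i).
have hM : forall n, (eps%:E * P (A n) <= \int[P]_w (Z n w)%:E)%E.
  move=> n.
  rewrite -(setIT (A n)) -integral_indic // -ge0_integralZl_EFin //; last 2 first.
  - by apply/measurable_EFinP; exact: measurable_indic.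
  - exact: ltW.
  under eq_integral do rewrite -EFinM.
  apply: ge0_le_integral => //.
  - move=> w _; rewrite lee_fin indicE.
    by rewrite mulr_ge0 // ltW.
  - apply/measurable_EFinP; apply: measurable_funM => //; exact: measurable_indic.
  - by apply/measurable_EFinP.
  - move=> w _; rewrite lee_fin indicE; case: (boolP (w \in A n)) => wA.
      rewrite mulr1; move: wA; rewrite inE => wA.
      exact: le_trans (ltW wA) (hF n w).
    by rewrite mulr0.
have hZ : forall n, (\int[P]_w (Z n w)%:E = ((Num.sqrt n%:R)^-1 * ((e n + e n) *+ n))%:E)%E.
  move=> n; rewrite /Z.
  under eq_integral do rewrite EFinM.
  rewrite ge0_integralZl_EFin //; cycle 1.
  - by move=> w _; rewrite lee_fin; apply: sumr_ge0 => i _; rewrite addr_ge0.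
  - apply/measurable_EFinP; apply: measurable_sum => i.
    apply: measurable_funD => //; exact: measurableT_comp (mh n) (mYs i).
  rewrite EFinM; congr (_ * _)%E.
  under eq_integral do rewrite -sumEFin.
  rewrite ge0_integral_sum //; last 2 first.
  - move=> i; apply/measurable_EFinP; apply: measurable_funD => //.
    exact: measurableT_comp (mh n) (mYs i).
  - by move=> i w _; rewrite lee_fin addr_ge0.
  have -> : ((e n + e n) *+ n)%:E = (\sum_(i < n) ((e n + e n)%:E))%E.
    by rewrite sumEFin sumr_const card_ord.
  apply: eq_bigr => i _.
  under eq_integral do rewrite EFinD.
  rewrite ge0_integralD //.
  - rewrite hEi integral_cst //.
    rewrite [X in (_ * X)%E](_ : _ = 1%E); last exact: probability_setT.
    by rewrite mule1 Ee EFinD.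
  - by move=> w _; rewrite lee_fin.
  - by apply/measurable_EFinP; exact: measurableT_comp (mh n) (mYs i).
  - by move=> w _; rewrite lee_fin.
have hA7 : (fun n => (Num.sqrt n%:R)%:E * E n)%E @ \oo --> 0%E.
  apply: HA7b => //.
  exists 1, 1; split => //; split => //.
  by apply: nearW => n; rewrite divff ?gt_eqF // lexx.
have hu : (fun n => Num.sqrt n%:R * e n) @ \oo --> 0.
  have := fine_cvg hA7 => /(_ _) H.
  have {}H := H _.
  apply: cvg_trans H; apply: near_eq_cvg; apply: nearW => n /=.
  by rewrite Ee.
have sq : forall n : nat, (Num.sqrt n%:R)^-1 * n%:R = Num.sqrt n%:R :> R.
  move=> n; case: n => [|n]; first by rewrite sqrtr0 invr0 mul0r.
  rewrite -{2}(sqr_sqrtr (ler0n _ n.+1)) expr2 mulKf //.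
have Pfin : forall n, P (A n) \is a fin_num.
  move=> n; rewrite ge0_fin_numE ?measure_ge0 //.
  exact: le_lt_trans (probability_le1 P (mA n)) (ltry _).
apply: cvg_EFin; first exact: nearW.
apply: (@squeeze_cvgr _ _ _ _ (cst 0) (fun n => (eps^-1 * 2) * (Num.sqrt n%:R * e n))).
- apply: nearW => n /=; rewrite fine_ge0 ?measure_ge0 //=.
  have := hM n; rewrite (hZ n) -(fineK (Pfin n)) -EFinM lee_fin => H.
  rewrite -ler_pdivlMl // in H; apply: le_trans H _.
  by rewrite -[(e n + e n) *+ n]mulr_natl (mulrA (Num.sqrt n%:R)^-1) sq le_eqVlt; apply/orP; left; apply/eqP; ring.
- exact: cvg_cst.
- rewrite -(mulr0 (eps^-1 * 2)); exact: (cvgM (cvg_cst _) hu).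
Qed.
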